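(* Let $X$ be a Banach algebra. Let $\phi,\psi:X^2\to[0,\infty)$ and $f:X\to X$ with $f(0)=0$ satisfy $$\|f(xyx)-f(x)yx-xf(y)x-xyf(x)\|\le\psi(x,y),$$ $$\|f(2x+y)+f(x+2y)-f(3x)-f(3y)\|\le\phi(x,y)$$ for all $x,y\in X$. Assume there exists $0<L<1$ such that for all $x,y\in X$ $$\tfrac12\phi(2x,2y)\le L\phi(x,y),\qquad \lim_{k\to\infty}8^{-k}\psi(2^kx,2^ky)=0.$$ Then there exists a unique Jordan triple derivation $H:X\to X$ such that $$\|f(x)-H(x)\|\le\frac{1}{2-2L}\Phi(x)\quad\text{for all }x\in X,$$ where $\Phi(x)=\phi(\tfrac x2,0)+\phi(-\tfrac x2,0)+\phi(\tfrac x2,-\tfrac x2)+\phi(-\tfrac x3,\tfrac{2x}{3})$.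
   Context: A Jordan triple derivation on an algebra $X$ is an additive map $D:X\to X$ with $D(xyx)=D(x)yx+xD(y)x+xyD(x)$ for all $x,y\in X$. *)

(* Defs.v *)
From HB Require Import structures.
From mathcomp Require Import all_boot all_order all_algebra.
From mathcomp Require Import all_classical all_reals all_analysis.
Set Implicit Arguments. Unset Strict Implicit. Unset Printing Implicit Defensive.
Import Order.TTheory GRing.Theory Num.Theory.
Import numFieldNormedType.Exports.
Local Open Scope ring_scope.

Definition banach_algebra_mul (R : realType) (V : completeNormedModType R)
  (mul : V -> V -> V) : Prop :=
  (forall x y z, mul (mul x y) z = mul x (mul y z)) /\
  (forall x y z, mul (x + y) z = mul x z + mul y z) /\
  (forall x y z, mul x (y + z) = mul x y + mul x z) /\
  (forall (a : R) x y, mul (a *: x) y = a *: mul x y) /\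
  (forall (a : R) x y, mul x (a *: y) = a *: mul x y) /\
  (forall x y, `|mul x y| <= `|x| * `|y|).

Definition jordan_triple_derivation (R : realType) (V : completeNormedModType R)
  (mul : V -> V -> V) (D : V -> V) : Prop :=
  (forall x y, D (x + y) = D x + D y) /\
  (forall x y, D (mul (mul x y) x) =
     mul (mul (D x) y) x + mul (mul x (D y)) x + mul (mul x y) (D x)).

(* Submission.v *)
Require Import Defs.
From HB Require Import structures.
From mathcomp Require Import all_boot all_order all_algebra.
From mathcomp Require Import all_classical all_reals all_analysis.
From mathcomp Require Import ring lra zify.
Import Order.TTheory GRing.Theory Num.Theory.
Import numFieldNormedType.Exports.
Local Open Scope classical_set_scope.
Local Open Scope ring_scope.

Ltac zflat := apply/eqP; rewrite eq_sym -subr_eq0; apply/eqP;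
  rewrite !opprD !opprK !addrA.

Lemma exists_small (R : realType) (L e : R) : 0 <= L -> L < 1 -> 0 < e ->
  exists N, forall n, (N <= n)%N -> L ^+ n < e.
Proof.
move=> L0 L1 e0.
have := cvg_expr (z:=L); rewrite ger0_norm // => /(_ L1) /cvgrPdist_lt /(_ e e0).
move=> [N _ HN]; exists N => n Hn.
have := HN n Hn; rewrite /= sub0r normrN ger0_norm //; exact: exprn_ge0.
Qed.

Lemma sc_eq (R : realType) (V : lmodType R) (c d : R) (x : V) : c = d -> c *: x = d *: x.
Proof. by move=> ->. Qed.

Section Gen.
Variables (R : realType) (X : completeNormedModType R).

Lemma sub3 (u : nat -> X) (l : X) : u @ \oo --> l -> (fun k => u (3 * k)%N) @ \oo --> l.
Proof.
move=> /cvgrPdist_lt Hu; apply/cvgrPdist_lt => e e0.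
have [N _ HN] := Hu e e0; exists N => // k /= Hk; apply: HN; rewrite /=; lia.
Qed.

Lemma lin_cont (g : X -> X) (K : R) (u : nat -> X) (l : X) :
  0 <= K -> (forall a b, g (a - b) = g a - g b) -> (forall a, `|g a| <= K * `|a|) ->
  u @ \oo --> l -> (fun n => g (u n)) @ \oo --> g l.
Proof.
move=> K0 gB gK /cvgrPdist_lt Hu; apply/cvgrPdist_lt => e e0.
have e1 : 0 < e / (K + 1) by apply: divr_gt0 => //; lra.
have [N _ HN] := Hu _ e1; exists N => // n /= Hn.
rewrite -gB; apply: (le_lt_trans (gK _)).
have := HN n Hn; rewrite /= => h.
have : K * `|l - u n| <= K * (e / (K + 1)) by apply: ler_wpM2l => //; exact: ltW.
move=> h2; apply: (le_lt_trans h2).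
rewrite mulrA ltr_pdivrMr; last lra.
nra.
Qed.

Lemma lim_zero (u : nat -> X) (l : X) (b : nat -> R) :
  u @ \oo --> l -> (forall n, `|u n| <= b n) -> b @ \oo --> 0 -> l = 0.
Proof.
move=> ul ub b0; apply/normr0_eq0/le_anti/andP; split; last exact: normr_ge0.
have nl : (fun n => `|u n|) @ \oo --> `|l| by apply: cvg_norm.
rewrite -(cvg_lim _ nl) // -(cvg_lim _ b0) //.
apply: ler_lim; [by apply/cvg_ex; exists `|l| | by apply/cvg_ex; exists 0 | ].
by apply: nearW => n.
Qed.

Lemma lim_bound (u : nat -> X) (l : X) a c :
  u @ \oo --> l -> (forall n, `|a - u n| <= c) -> `|a - l| <= c.
Proof.
move=> ul ub.
have nl : (fun n => `|a - u n|) @ \oo --> `|a - l|.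
  by apply: cvg_norm; apply: cvgB => //; exact: cvg_cst.
rewrite -(cvg_lim _ nl) //; apply: limr_le; first by apply/cvg_ex; exists `|a - l|.
by apply: nearW.
Qed.

End Gen.
Section Main.
Variables (R : realType) (X : completeNormedModType R)
  (mul : X -> X -> X) (phi psi : X -> X -> R) (f : X -> X) (L : R).
Hypotheses (Hmul : banach_algebra_mul mul)
  (phi0 : forall x y, 0 <= phi x y) (psi0 : forall x y, 0 <= psi x y)
  (f0 : f 0 = 0)
  (Hpsi : forall x y, `|f (mul (mul x y) x) - mul (mul (f x) y) x
                 - mul (mul x (f y)) x - mul (mul x y) (f x)| <= psi x y)
  (Hphi : forall x y, `|f (2%:R *: x + y) + f (x + 2%:R *: y)
                 - f (3%:R *: x) - f (3%:R *: y)| <= phi x y)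
  (L0 : 0 < L) (L1 : L < 1)
  (HL : forall x y, 2%:R^-1 * phi (2%:R *: x) (2%:R *: y) <= L * phi x y)
  (Hlim : forall x y, (fun k : nat => (8%:R ^+ k)^-1 *
                  psi ((2%:R ^+ k) *: x) ((2%:R ^+ k) *: y)) @ \oo --> (0 : R)).

Definition Phi := fun x : X =>
    phi (2%:R^-1 *: x) 0 + phi (- (2%:R^-1) *: x) 0
    + phi (2%:R^-1 *: x) (- (2%:R^-1) *: x)
    + phi (- (3%:R^-1) *: x) ((2%:R / 3%:R) *: x).

Lemma phi2 x y : phi (2%:R *: x) (2%:R *: y) <= 2%:R * L * phi x y.
Proof. have := HL x y; rewrite -mulrA; move=> h; rewrite -ler_pdivrMl //; lra. Qed.

Lemma phin n x y : phi (2%:R ^+ n *: x) (2%:R ^+ n *: y) <= (2%:R * L) ^+ n * phi x y.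
Proof.
elim: n => [|n IH]; first by rewrite !expr0 !scale1r mul1r.
rewrite !exprS -!scalerA -mulrA; apply: (le_trans (phi2 _ _)).
apply: ler_wpM2l => //; apply: mulr_ge0 => //; exact: ltW.
Qed.

Lemma sc2 (c : R) (x : X) : c *: (2%:R *: x) = 2%:R *: (c *: x).
Proof. by rewrite !scalerA mulrC. Qed.

Lemma Phi_ge0 x : 0 <= Phi x.
Proof. by rewrite /Phi !addr_ge0. Qed.

Lemma Phi2 x : Phi (2%:R *: x) <= 2%:R * L * Phi x.
Proof.
have z : (0 : X) = 2%:R *: 0 by rewrite scaler0.
rewrite /Phi !sc2 {1 2}z !mulrDr.
by rewrite !lerD ?phi2.
Qed.

Lemma Phin n x : Phi (2%:R ^+ n *: x) <= (2%:R * L) ^+ n * Phi x.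
Proof.
elim: n => [|n IH]; first by rewrite !expr0 !scale1r mul1r.
rewrite !exprS -!scalerA -mulrA; apply: (le_trans (Phi2 _)).
apply: ler_wpM2l => //; apply: mulr_ge0 => //; exact: ltW.
Qed.

Lemma key x : `|f (2%:R *: x) - 2%:R *: f x| <= Phi x.
Proof.
set x2 := 2%:R^-1 *: x; set nx2 := - (2%:R^-1) *: x.
have hA := Hphi x2 0; have hB := Hphi nx2 0; have hC := Hphi x2 nx2.
have hD := Hphi (- (3%:R^-1) *: x) ((2%:R / 3%:R) *: x).
have e1 : 2%:R *: x2 + 0 = x.
  by rewrite addr0 /x2 scalerA mulfV ?scale1r // pnatr_eq0.
have e2 : 2%:R *: nx2 + 0 = - x.
  by rewrite addr0 /nx2 scalerA mulrN mulfV ?scaleN1r // pnatr_eq0.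
have e3 : 2%:R *: x2 + nx2 = x2.
  by rewrite /x2 /nx2 scalerA -scalerDl; apply: sc_eq; field.
have e4 : x2 + 2%:R *: nx2 = nx2.
  by rewrite /x2 /nx2 scalerA -scalerDl; apply: sc_eq; field.
have e5 : 2%:R *: (- (3%:R^-1) *: x) + (2%:R / 3%:R) *: x = 0.
  by rewrite scalerA -scalerDl -(scale0r x); apply: sc_eq; field.
have e6 : - (3%:R^-1) *: x + 2%:R *: ((2%:R / 3%:R) *: x) = x.
  by rewrite scalerA -scalerDl -[RHS]scale1r; apply: sc_eq; field.
have e7 : 3%:R *: (- (3%:R^-1) *: x) = - x.
  by rewrite scalerA -[RHS]scaleN1r; apply: sc_eq; field.
have e8 : 3%:R *: ((2%:R / 3%:R) *: x) = 2%:R *: x.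
  by rewrite scalerA; apply: sc_eq; field.
rewrite e1 !scaler0 !addr0 f0 subr0 in hA.
rewrite e2 !scaler0 !addr0 f0 subr0 in hB.
rewrite e3 e4 in hC.
rewrite e5 e6 e7 e8 f0 add0r in hD.
have -> : f (2%:R *: x) - 2%:R *: f x =
  - ((f x + f x2 - f (3%:R *: x2)) + (f (- x) + f nx2 - f (3%:R *: nx2))
     - (f x2 + f nx2 - f (3%:R *: x2) - f (3%:R *: nx2))
     + (f x - f (- x) - f (2%:R *: x))).
  rewrite (scaler_nat 2 (f x)) mulr2n; zflat.
  rewrite (ACl ((1*15)*(2*7)*(3*9)*(4*12)*(5*8)*(6*10)*(11*16)*(13*14))%AC) /=.
  by rewrite !addNr !subrr !addr0.
rewrite normrN /Phi; apply: (le_trans (ler_normD _ _)); apply: lerD => //.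
apply: (le_trans (ler_normB _ _)); apply: lerD => //.
apply: (le_trans (ler_normD _ _)); exact: lerD.
Qed.
Definition h n x := (2%:R ^+ n)^-1 *: f (2%:R ^+ n *: x).

Lemma two_neq0 n : (2%:R ^+ n : R) != 0.
Proof. by rewrite expf_neq0 // pnatr_eq0. Qed.

Lemma hstep n x : `|h n.+1 x - h n x| <= 2%:R^-1 * L ^+ n * Phi x.
Proof.
have -> : h n.+1 x - h n x =
   (2%:R ^+ n.+1)^-1 *: (f (2%:R *: (2%:R ^+ n *: x)) - 2%:R *: f (2%:R ^+ n *: x)).
  rewrite /h scalerBr scalerA -exprS; congr (_ - _).
  rewrite scalerA; apply: sc_eq; rewrite exprS; field.
  exact: two_neq0.
rewrite normrZ ger0_norm; last by rewrite invr_ge0 exprn_ge0.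
apply: (le_trans (ler_wpM2l _ (key _))); first by rewrite invr_ge0 exprn_ge0.
apply: (le_trans (ler_wpM2l _ (Phin _ _))); first by rewrite invr_ge0 exprn_ge0.
rewrite le_eqVlt; apply/orP; left; apply/eqP.
rewrite exprMn exprS; field; by rewrite ?two_neq0 ?pnatr_eq0.
Qed.

Definition C x := (2%:R - 2%:R * L)^-1 * Phi x.

Lemma C_ge0 x : 0 <= C x.
Proof. apply: mulr_ge0; last exact: Phi_ge0. rewrite invr_ge0. move: L1; lra. Qed.

Lemma hcauchy n k x : `|h (n + k) x - h n x| <= C x * L ^+ n * (1 - L ^+ k).
Proof.
elim: k => [|k IH]; first by rewrite addn0 subrr normr0 expr0 subrr mulr0.
rewrite addnS.
have -> : h (n + k).+1 x - h n x = (h (n + k).+1 x - h (n + k) x) + (h (n + k) x - h n x).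
  by rewrite addrA subrK.
apply: (le_trans (ler_normD _ _)).
apply: (le_trans (lerD (hstep _ _) IH)).
rewrite le_eqVlt; apply/orP; left; apply/eqP.
rewrite /C exprD exprS; field; move: L1; lra.
Qed.

Lemma hcauchy' n k x : `|h n x - h (n + k) x| <= C x * L ^+ n.
Proof.
rewrite distrC; apply: (le_trans (hcauchy _ _ _)).
rewrite -[leRHS]mulr1; apply: ler_wpM2l.
  apply: mulr_ge0; [exact: C_ge0 | apply: exprn_ge0; move: L0; lra].
have : 0 <= L ^+ k by apply: exprn_ge0; move: L0; lra.
lra.
Qed.

Lemma hcvg x : cvg (h ^~ x @ \oo).
Proof.
apply: cauchy_cvg; apply: cauchy_exP => e e0.
have e1 : 0 < e / (C x + 1) by apply: divr_gt0 => //; have := C_ge0 x; lra.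
have [N HN] := @exists_small _ _ _ (ltW L0) L1 e1.
exists (h N x); exists N => // m /= Hm.
rewrite -ball_normE /ball_ /=.
rewrite -(subnKC Hm); apply: (le_lt_trans (hcauchy' _ _ _)).
have := HN N (leqnn N); rewrite ltr_pdivlMr; last by have := C_ge0 x; lra.
have := C_ge0 x; have : 0 <= L ^+ N by apply: exprn_ge0; move: L0; lra.
nra.
Qed.

Definition H x := lim (h ^~ x @ \oo).

Lemma hH x : h ^~ x @ \oo --> H x.
Proof. exact: hcvg. Qed.

Lemma fH x : `|f x - H x| <= C x.
Proof.
apply: (@lim_bound _ _ _ _ _ _ (hH x)) => n.
have e : h 0 x = f x by rewrite /h expr0 invr1 !scale1r.
by have := hcauchy' 0 n x; rewrite add0n expr0 mulr1 e.
Qed.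

Lemma H0 : H 0 = 0.
Proof.
rewrite /H; have -> : h ^~ 0 = fun _ => 0.
  by apply: funext => n; rewrite /h scaler0 f0 scaler0.
exact: lim_cst.
Qed.

Lemma scC (c d : R) (v : X) : c *: (d *: v) = d *: (c *: v).
Proof. by rewrite !scalerA mulrC. Qed.

Lemma H2 x : H (2%:R *: x) = 2%:R *: H x.
Proof.
rewrite /H; apply: cvg_lim => //.
have -> : h ^~ (2%:R *: x) = fun n => 2%:R *: h n.+1 x.
  apply: funext => n; rewrite /h !scalerA -exprSr; apply: sc_eq.
  rewrite exprS; field; exact: two_neq0.
apply: cvgZr; have := hH x; by rewrite -cvg_shiftS.
Qed.

Lemma PH x y : H (2%:R *: x + y) + H (x + 2%:R *: y) - H (3%:R *: x) - H (3%:R *: y) = 0.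
Proof.
apply: (@lim_zero _ _ (fun n => h n (2%:R *: x + y) + h n (x + 2%:R *: y)
   - h n (3%:R *: x) - h n (3%:R *: y)) _ (geometric (phi x y) L)).
- by apply: cvgB; [apply: cvgB; [apply: cvgD|]|]; exact: hH.
- move=> n; rewrite /h !(scalerDr (2%:R ^+ n)) !(scC (2%:R ^+ n)).
  rewrite -scalerDr -!scalerBr.
  rewrite normrZ ger0_norm; last by rewrite invr_ge0 exprn_ge0.
  apply: (le_trans (ler_wpM2l _ (Hphi _ _))); first by rewrite invr_ge0 exprn_ge0.
  apply: (le_trans (ler_wpM2l _ (phin _ _ _))); first by rewrite invr_ge0 exprn_ge0.
  rewrite le_eqVlt; apply/orP; left; apply/eqP.
  rewrite /geometric /= exprMn; field; exact: two_neq0.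
- apply: cvg_geometric; rewrite ger0_norm //; exact: ltW.
Qed.

Lemma H3 x : H (3%:R *: x) = 3%:R *: H x.
Proof.
have := PH x 0; rewrite !scaler0 !addr0 H0 subr0 H2.
move/eqP; rewrite subr_eq0 => /eqP <-.
by rewrite (scaler_nat 3 (H x)) (scaler_nat 2 (H x)) [RHS]mulrSr.
Qed.

Lemma Hodd x : H (- x) = - H x.
Proof.
have := PH x (- x).
have -> : 2%:R *: x + - x = x by rewrite scaler_nat mulr2n addrK.
have -> : x + 2%:R *: - x = - x by rewrite scaler_nat mulr2n addrA subrr add0r.
rewrite !H3 => E.
have : 2%:R *: (H x + H (- x)) = 0.
  have E' := congr1 (fun v => - v) E; rewrite /= oppr0 in E'; rewrite -E'.
  rewrite !scaler_nat !mulrS !mulr0n !addr0.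
  zflat.
  rewrite (ACl ((1*3)*(2*6)*(4*9)*(5*11)*(7*10)*(8*12))%AC) /=.
  by rewrite !addNr !subrr !addr0.
move/eqP; rewrite scaler_eq0 pnatr_eq0 /= addr_eq0 => /eqP ->.
by rewrite opprK.
Qed.

Lemma lc_eq (p q r s : R) (a b : X) : p = r -> q = s -> p *: a + q *: b = r *: a + s *: b.
Proof. by move=> -> ->. Qed.

Lemma Hadd2 a b : H (2%:R *: a + b) = 2%:R *: H a + H b.
Proof.
set x0 := (2%:R / 3%:R) *: a + (3%:R^-1) *: b.
set y0 := (- 3%:R^-1) *: a + (- (2%:R / 3%:R)) *: b.
have n3 : (3%:R : R) != 0 by rewrite pnatr_eq0.
have e1 : 2%:R *: x0 + y0 = 1 *: a + 0 *: b.
  rewrite /x0 /y0 !scalerDr !scalerA addrACA -!scalerDl; apply: lc_eq; field => //.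
have e2 : x0 + 2%:R *: y0 = 0 *: a + (- 1) *: b.
  rewrite /x0 /y0 !scalerDr !scalerA addrACA -!scalerDl; apply: lc_eq; field => //.
have e3 : 3%:R *: x0 = 2%:R *: a + 1 *: b.
  rewrite /x0 /y0 !scalerDr !scalerA; apply: lc_eq; field => //.
have e4 : 3%:R *: y0 = (- 1) *: a + (- 2%:R) *: b.
  rewrite /x0 /y0 !scalerDr !scalerA; apply: lc_eq; field => //.
rewrite scale1r scale0r addr0 in e1.
rewrite scale0r add0r scaleN1r in e2.
rewrite scale1r in e3.
rewrite scaleN1r scaleNr -opprD in e4.
have := PH x0 y0; rewrite e1 e2 e3 e4 !Hodd opprK => E1.
have := PH a b; rewrite !H3 => E2.
have : 2%:R *: (H (2%:R *: a + b) - (2%:R *: H a + H b)) = 0.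
  rewrite -[RHS](subr0 0) -{1}E2 -{1}E1.
  rewrite !scaler_nat !mulrS !mulr0n !addr0.
  zflat.
  rewrite (ACl ((1*13)*(2*12)*(11*17)*(3*14)*(4*15)*(5*18)*(9*19)*(6*10)*(7*16)*(8*20))%AC) /=.
  by rewrite !addNr !subrr !addr0.
move/eqP; rewrite scaler_eq0 pnatr_eq0 /= subr_eq0 => /eqP.
exact.
Qed.

Lemma Hadd x y : H (x + y) = H x + H y.
Proof.
have -> : x = 2%:R *: (2%:R^-1 *: x).
  by rewrite scalerA mulfV ?scale1r // pnatr_eq0.
by rewrite Hadd2 H2.
Qed.

Lemma mulBl' u v w : mul (u - v) w = mul u w - mul v w.
Proof.
have [_ [mDl [_ [mZl _]]]] := Hmul.
by rewrite mDl -scaleN1r mZl scaleN1r.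
Qed.

Lemma mulBr' u v w : mul w (u - v) = mul w u - mul w v.
Proof.
have [_ [_ [mDr [_ [mZr _]]]]] := Hmul.
by rewrite mDr -scaleN1r mZr scaleN1r.
Qed.

Lemma HJ x y : H (mul (mul x y) x) =
  mul (mul (H x) y) x + mul (mul x (H y)) x + mul (mul x y) (H x).
Proof.
have [mA [mDl [mDr [mZl [mZr mN]]]]] := Hmul.
suff E : H (mul (mul x y) x) - mul (mul (H x) y) x - mul (mul x (H y)) x
   - mul (mul x y) (H x) = 0.
  by apply/eqP; rewrite -subr_eq0 !opprD !addrA; apply/eqP.
apply: (@lim_zero _ _ (fun k => h (3 * k)%N (mul (mul x y) x)
   - mul (mul (h k x) y) x - mul (mul x (h k y)) x - mul (mul x y) (h k x)) _
   (fun k => (8%:R ^+ k)^-1 * psi (2%:R ^+ k *: x) (2%:R ^+ k *: y))).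
- apply: cvgB; [apply: cvgB; [apply: cvgB|]|].
  + exact: (@sub3 _ _ (h ^~ (mul (mul x y) x)) _ (hH _)).
  + apply: (@lin_cont _ _ (fun u => mul (mul u y) x) (`|y| * `|x|) (h ^~ x) (H x)).
    * by apply: mulr_ge0.
    * by move=> a b; rewrite !mulBl'.
    * move=> a; apply: (le_trans (mN _ _)).
      apply: (le_trans (ler_wpM2r (normr_ge0 _) (mN _ _))).
      by rewrite le_eqVlt; apply/orP; left; apply/eqP; ring.
    * exact: hH.
  + apply: (@lin_cont _ _ (fun u => mul (mul x u) x) (`|x| * `|x|) (h ^~ y) (H y)).
    * by apply: mulr_ge0.
    * by move=> a b; rewrite mulBr' mulBl'.
    * move=> a; apply: (le_trans (mN _ _)).
      apply: (le_trans (ler_wpM2r (normr_ge0 _) (mN _ _))).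
      by rewrite le_eqVlt; apply/orP; left; apply/eqP; ring.
    * exact: hH.
  + apply: (@lin_cont _ _ (fun u => mul (mul x y) u) (`|x| * `|y|) (h ^~ x) (H x)).
    * by apply: mulr_ge0.
    * by move=> a b; rewrite mulBr'.
    * move=> a; apply: (le_trans (mN _ _)).
      apply: (le_trans (ler_wpM2r (normr_ge0 _) (mN _ _))).
      by rewrite le_eqVlt; apply/orP; left; apply/eqP; ring.
    * exact: hH.
- move=> k; set t := (2%:R ^+ k : R).
  have t0 : t != 0 by exact: two_neq0.
  have e8 : (8%:R ^+ k : R) = t * (t * t).
    have -> : (8%:R : R) = 2%:R ^+ 3 by rewrite -natrX.
    by rewrite /t -!exprD -exprM; congr (_ ^+ _); lia.
  have e3 : (2%:R ^+ (3 * k) : R) = t * (t * t).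
    by rewrite /t -!exprD; congr (_ ^+ _); lia.
  rewrite e8.
  have -> : h (3 * k) (mul (mul x y) x) - mul (mul (h k x) y) x
      - mul (mul x (h k y)) x - mul (mul x y) (h k x) =
    (t * (t * t))^-1 *: (f (mul (mul (t *: x) (t *: y)) (t *: x))
      - mul (mul (f (t *: x)) (t *: y)) (t *: x)
      - mul (mul (t *: x) (f (t *: y))) (t *: x)
      - mul (mul (t *: x) (t *: y)) (f (t *: x))).
    rewrite /h e3 -/t !mZl !mZr !mZl !scalerA !scalerBr !scalerA.
    congr (_ - _ - _ - _); first by rewrite mulrA.
    1-3: by apply: (congr1 (fun c : R => c *: _)); field; exact: t0.
  rewrite normrZ ger0_norm; last by rewrite invr_ge0 /t !mulr_ge0 ?exprn_ge0.
  apply: ler_wpM2l; first by rewrite invr_ge0 /t !mulr_ge0 ?exprn_ge0.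
  exact: Hpsi.
- exact: Hlim.
Qed.

Lemma addhom (g : X -> X) : (forall a b, g (a + b) = g a + g b) ->
  forall n x, g (2%:R ^+ n *: x) = 2%:R ^+ n *: g x.
Proof.
move=> gadd; elim=> [|n IH] x; first by rewrite expr0 !scale1r.
have e : forall v : X, 2%:R *: v = v + v by move=> v; rewrite scaler_nat mulr2n.
by rewrite exprS -!scalerA !e gadd IH.
Qed.

Lemma unique H' : jordan_triple_derivation mul H' ->
  (forall x, `|f x - H' x| <= C x) -> H' = H.
Proof.
move=> [H'add _] H'b; apply: funext => x; apply/eqP; rewrite -subr_eq0; apply/eqP.
apply: (@lim_zero _ _ (fun _ => H' x - H x) _ (geometric (2%:R * C x) L)).
- exact: cvg_cst.
- move=> n.
  have E : H' x - H x = (2%:R ^+ n)^-1 *: ((H' (2%:R ^+ n *: x) - f (2%:R ^+ n *: x))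
        + (f (2%:R ^+ n *: x) - H (2%:R ^+ n *: x))).
    rewrite addrA subrK (@addhom _ H'add) (@addhom _ Hadd) -scalerBr scalerA mulVf ?scale1r //.
  rewrite E normrZ ger0_norm; last by rewrite invr_ge0 exprn_ge0.
  apply: (le_trans (ler_wpM2l _ (ler_normD _ _))); first by rewrite invr_ge0 exprn_ge0.
  rewrite distrC.
  apply: (le_trans (ler_wpM2l _ (lerD (H'b _) (fH _)))); first by rewrite invr_ge0 exprn_ge0.
  have hc : C (2%:R ^+ n *: x) <= (2%:R - 2%:R * L)^-1 * ((2%:R * L) ^+ n * Phi x).
    apply: ler_wpM2l; last exact: Phin.
    by rewrite invr_ge0; move: L1; lra.
  apply: (le_trans (ler_wpM2l _ (lerD hc hc))); first by rewrite invr_ge0 exprn_ge0.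
  rewrite le_eqVlt; apply/orP; left; apply/eqP.
  rewrite /geometric /C /= exprMn; field.
  by rewrite two_neq0 /=; move: L1; lra.
- apply: cvg_geometric; rewrite ger0_norm //; exact: ltW.
Qed.

Lemma main_exists : exists H0 : X -> X,
    [/\ jordan_triple_derivation mul H0,
        (forall x, `|f x - H0 x| <= (2%:R - 2%:R * L)^-1 * Phi x)
      & (forall H' : X -> X, jordan_triple_derivation mul H' ->
          (forall x, `|f x - H' x| <= (2%:R - 2%:R * L)^-1 * Phi x) ->
          H' = H0)].
Proof.
exists H; split.
- split; [exact: Hadd | exact: HJ].
- exact: fH.
- move=> H' J b; exact: unique.
Qed.

End Main.

Theorem theorem2p6 (R : realType) (X : completeNormedModType R)
  (mul : X -> X -> X) (phi psi : X -> X -> R) (f : X -> X) (L : R) :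
  banach_algebra_mul mul ->
  (forall x y, 0 <= phi x y) -> (forall x y, 0 <= psi x y) ->
  f 0 = 0 ->
  (forall x y, `|f (mul (mul x y) x) - mul (mul (f x) y) x
                 - mul (mul x (f y)) x - mul (mul x y) (f x)| <= psi x y) ->
  (forall x y, `|f (2%:R *: x + y) + f (x + 2%:R *: y)
                 - f (3%:R *: x) - f (3%:R *: y)| <= phi x y) ->
  0 < L -> L < 1 ->
  (forall x y, 2%:R^-1 * phi (2%:R *: x) (2%:R *: y) <= L * phi x y) ->
  (forall x y, (fun k : nat => (8%:R ^+ k)^-1 *
                  psi ((2%:R ^+ k) *: x) ((2%:R ^+ k) *: y)) @ \oo --> (0 : R)) ->
  let Phi := fun x : X =>
    phi (2%:R^-1 *: x) 0 + phi (- (2%:R^-1) *: x) 0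
    + phi (2%:R^-1 *: x) (- (2%:R^-1) *: x)
    + phi (- (3%:R^-1) *: x) ((2%:R / 3%:R) *: x) in
  exists H : X -> X,
    [/\ jordan_triple_derivation mul H,
        (forall x, `|f x - H x| <= (2%:R - 2%:R * L)^-1 * Phi x)
      & (forall H' : X -> X, jordan_triple_derivation mul H' ->
          (forall x, `|f x - H' x| <= (2%:R - 2%:R * L)^-1 * Phi x) ->
          H' = H)].
Proof.
move=> Hmul phi0 psi0 f0 Hpsi Hphi L0 L1 HL Hlim Phi.
have := @main_exists _ _ _ _ _ _ _ Hmul phi0 f0 Hpsi Hphi L0 L1 HL Hlim.
rewrite /Phi /Submission.Phi. exact.
Qed.
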